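(* Suppose a social choice function $f$ is rationalizably implemented by a mechanism $\mathcal{M}$. Then for all $\theta,\theta'\in\Theta$: if $S_i^{\mathcal{M},\theta}\subseteq S_i^{\mathcal{M},\theta'}$ for every $i\in\mathcal{I}$, then $S_i^{\mathcal{M},\theta}=S_i^{\mathcal{M},\theta'}$ for every $i\in\mathcal{I}$.
   Context: Setting: $\mathcal{I}$ is a finite set of agents with $|\mathcal{I}|\ge3$; $\Theta$ is a finite set of states; $Z$ is a countable set of pure outcomes; $Y=\Delta(Z)$ is the set of lotteries on $Z$, each $z\in Z$ identified with the degenerate lottery. Each agent $i$ has at each state $\theta$ a utility $u_i(\cdot,\theta):Z\to\mathbb{R}$, extended to $Y$ by expected utility. An SCF is a map $f:\Theta\to Z$ (assumed with $|f(\Theta)|\ge2$). A mechanism is $\mathcal{M}=\langle M=\times_iM_i,\ g:M\to Y\rangle$ with each $M_i$ countable. For state $\theta$ and profile $S=(S_i)_i$, $S_i\subseteq M_i$, $b_i^{\mathcal{M},\theta}(S)$ is the set of $m_i\in M_i$ for which there is a probability distribution $\lambda_{-i}$ on $M_{-i}$ supported in $S_{-i}=\times_{j\ne i}S_j$ with $m_i\in\arg\max_{m_i'\in M_i}\sum_{m_{-i}}\lambda_{-i}(m_{-i})u_i(g(m_i',m_{-i}),\theta)$. $S^{\mathcal{M},\theta}=(S_i^{\mathcal{M},\theta})_i$ is the largest fixed point of the monotone operator $b^{\mathcal{M},\theta}=(b_i^{\mathcal{M},\theta})_i$ with respect to componentwise inclusion, identified with the product $\times_iS_i^{\mathcal{M},\theta}$.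 $f$ is rationalizably implemented by $\mathcal{M}$ if $g(S^{\mathcal{M},\theta})=\{f(\theta)\}$ for every $\theta\in\Theta$. *)

(* Defs.v *)
From HB Require Import structures.
From mathcomp Require Import all_boot all_order all_algebra.
From mathcomp Require Import all_classical all_reals all_analysis.
Unset Printing Implicit Defensive.
Import Order.TTheory GRing.Theory Num.Theory.
Local Open Scope classical_set_scope.
Local Open Scope ring_scope.

Definition is_prob {R : realType} {T : choiceType} (p : T -> R) : Prop :=
  (forall t, 0 <= p t) /\ (\esum_(t in [set: T]) (p t)%:E = 1)%E.

Record lottery (R : realType) (Z : choiceType) := Lottery {
  lot :> Z -> R ;
  lotP : is_prob lot }.
Arguments lot {R Z}.
Arguments lotP {R Z}.

Definition is_degenerate {R : realType} {Z : choiceType} (y : lottery R Z) (z : Z)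
  : Prop := forall t, lot y t = if t == z then 1 else 0.

Definition eexpect {R : realType} {T : choiceType} (p : T -> R) (h : T -> \bar R)
  : \bar R :=
  (\esum_(t in [set: T]) ((fun t => (p t)%:E * h t)^\+ t)
   - \esum_(t in [set: T]) ((fun t => (p t)%:E * h t)^\- t))%E.

Definition EU {R : realType} {Z : choiceType} (v : Z -> R) (y : lottery R Z) : \bar R :=
  eexpect (lot y) (fun z => (v z)%:E).

Definition profile {I : finType} (M : I -> countType) := {dffun forall i, M i}.

Definition upd {I : finType} {M : I -> countType} (m : profile M) (i : I) (x : M i)
  : profile M := [ffun j => @dfwith I (fun k => M k) (fun k => m k) i x j].

(* A belief lambda_{-i} on M_{-i} is represented as a
   probability distribution on full profiles whose j-th components (j <> i)
   lie in S_j on its support; the i-th component is ignored since it is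
   overwritten by the deviation m_i'. *)
Definition bestresp {R : realType} {I : finType} {Z : countType} {Theta : Type}
  {M : I -> countType} (g : profile M -> lottery R Z)
  (u : I -> Z -> Theta -> R) (theta : Theta)
  (S : forall i, set (M i)) (i : I) : set (M i) :=
  [set mi | exists lam : profile M -> R,
      [/\ is_prob lam,
          (forall m, lam m != 0 -> forall j, j != i -> S j (m j)) &
          forall mi' : M i,
            (eexpect lam (fun m => EU (fun z => u i z theta) (g (upd m i mi')))
             <= eexpect lam (fun m => EU (fun z => u i z theta) (g (upd m i mi))))%E]].

Definition is_rat_set {R : realType} {I : finType} {Z : countType} {Theta : Type}
  {M : I -> countType} (g : profile M -> lottery R Z)
  (u : I -> Z -> Theta -> R) (theta : Theta) (S : forall i, set (M i)) : Prop :=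
  (forall i, bestresp g u theta S i = S i) /\
  (forall T : forall i, set (M i),
      (forall i, bestresp g u theta T i = T i) -> forall i, T i `<=` S i).

Definition rat_implements {R : realType} {I : finType} {Z : countType} {Theta : Type}
  {M : I -> countType} (g : profile M -> lottery R Z)
  (u : I -> Z -> Theta -> R) (f : Theta -> Z) : Prop :=
  forall theta (S : forall i, set (M i)), is_rat_set g u theta S ->
    (exists m : profile M, forall i, S i (m i)) /\
    (forall m : profile M, (forall i, S i (m i)) -> is_degenerate (g m) (f theta)).

(* Main.v *)
Require Import Defs.
From HB Require Import structures.
From mathcomp Require Import all_boot all_order all_algebra.
From mathcomp Require Import all_classical all_reals all_analysis.
Import Order.TTheory GRing.Theory Num.Theory.
Local Open Scope classical_set_scope.
Local Open Scope ring_scope.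

Lemma upd_out {I : finType} {M : I -> countType} (m : profile M) (i j : I) (x : M i) :
  j != i -> upd m i x j = m j.
Proof. by move=> ji; rewrite /upd ffunE dfwithout // eq_sym. Qed.

Lemma upd_in {I : finType} {M : I -> countType} (m : profile M) (i : I) (x : M i) :
  upd m i x i = x.
Proof. by rewrite /upd ffunE dfwithin. Qed.

Lemma eexpect_ext {R : realType} {T : choiceType} (p : T -> R) (h1 h2 : T -> \bar R) :
  (forall t, p t != 0 -> h1 t = h2 t) -> eexpect p h1 = eexpect p h2.
Proof.
move=> H; rewrite /eexpect.
have -> : (fun t => (p t)%:E * h1 t)%E = (fun t => (p t)%:E * h2 t)%E.
  apply/funext => t; have [/eqP -> |/H ->] := boolP (p t == 0); last by [].
  by rewrite !mul0e.
by [].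
Qed.

Lemma EU_ext {R : realType} {Z : choiceType} (v : Z -> R) (y1 y2 : lottery R Z) :
  lot y1 =1 lot y2 -> EU v y1 = EU v y2.
Proof. by move=> H; rewrite /EU (funext H). Qed.

Theorem lemma1 (R : realType) (I : finType) (Theta : finType) (Z : countType)
  (u : I -> Z -> Theta -> R) (f : Theta -> Z)
  (hI : (3 <= #|I|)%N) (hf : exists th1 th2, f th1 != f th2)
  (M : I -> countType) (g : profile M -> lottery R Z)
  (himpl : rat_implements g u f) :
  forall (theta theta' : Theta) (S S' : forall i, set (M i)),
    is_rat_set g u theta S -> is_rat_set g u theta' S' ->
    (forall i, S i `<=` S' i) -> forall i, S i = S' i.
Proof.
move=> th th' S S' hS hS' sub.
have [[m0 Hm0] degS] := himpl th S hS.
have [_ degS'] := himpl th' S' hS'.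
have eqf : f th = f th'.
  have d1 := degS m0 Hm0.
  have d2 := degS' m0 (fun i => sub i _ (Hm0 i)).
  apply/eqP; apply/negP => /negP ne.
  have := d1 (f th); have := d2 (f th); rewrite eqxx (negbTE ne) => -> h.
  by have := @ltr01 R; rewrite -h ltxx.
move=> i; apply/seteqP; split; first exact: sub.
move=> mi Hmi.
case: hS => hfix _.
have := Hm0 i; rewrite -(hfix i) => -[lam [plam supp br]].
exists lam; split; [exact: plam | exact: supp | move=> mi']. 
suff -> : eexpect lam (fun m => EU (fun z => u i z th) (g (upd m i mi))) =
          eexpect lam (fun m => EU (fun z => u i z th) (g (upd m i (m0 i)))) by apply: br.
apply: eexpect_ext => m lm; apply: EU_ext => t.
have inS' : forall j, S' j (upd m i mi j).
  move=> j; have [/eqP -> | ji] := boolP (j == i); first by rewrite upd_in.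
  by rewrite upd_out //; apply: sub; apply: supp.
have inS : forall j, S j (upd m i (m0 i) j).
  move=> j; have [/eqP -> | ji] := boolP (j == i); first by rewrite upd_in.
  by rewrite upd_out //; apply: supp.
by rewrite (degS' _ inS') (degS _ inS) eqf.
Qed.
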